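(* Let $\Gamma_1=(V_1,\nu_1,\mu_1)$ and $\Gamma_2=(V_2,\nu_2,\mu_2)$ be fuzzy graphs and $\Gamma=\Gamma_1\square\Gamma_2$ their Cartesian product. Then $$\sigma^*(\Gamma)=\sigma^*(\Gamma_1)+\sigma^*(\Gamma_2).$$
   Context: A fuzzy graph $\Gamma=(V,\nu,\mu)$ consists of a finite nonempty vertex set $V$, a map $\nu:V\to[0,1]$, and a symmetric map $\mu:V\times V\to[0,1]$ with $\mu(u,v)\le\min(\nu(u),\nu(v))$. The fuzzy degree is $d_\Gamma(v)=\sum_{u\ne v}\mu(v,u)$, the fuzzy size is $\mathrm{ew}(\Gamma)=\frac12\sum_v d_\Gamma(v)$, and with $n=|V|$, $\lambda=2\,\mathrm{ew}(\Gamma)/n$, the fuzzy sigma index is $\sigma^*(\Gamma)=\frac1n\sum_{v}(d_\Gamma(v)-\lambda)^2$. The Cartesian product $\Gamma_1\square\Gamma_2$ is the fuzzy graph on $V_1\times V_2$ whose edge membership is $\mu((u,v),(u,v'))=\mu_2(v,v')$ for $v\ne v'$, $\mu((u,v),(u',v))=\mu_1(u,u')$ for $u\neq u'$, and $0$ for all other pairs of distinct vertices, so that $d_\Gamma(u,v)=d_{\Gamma_1}(u)+d_{\Gamma_2}(v)$. *)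

(* Defs.v *)
From mathcomp Require Import all_boot all_order all_algebra.
Set Implicit Arguments. Unset Strict Implicit. Unset Printing Implicit Defensive.
Import Order.TTheory GRing.Theory Num.Theory.
Local Open Scope ring_scope.

Section FuzzyGraphs.
Variable R : realFieldType.

(* A fuzzy graph on a finite vertex type V (the vertex set is all of V). *)
Record fuzzy_graph (V : finType) := FuzzyGraph {
  fnu : V -> R;
  fmu : V -> V -> R
}.

Definition is_fuzzy_graph (V : finType) (G : fuzzy_graph V) : Prop :=
  (forall v, 0 <= fnu G v <= 1) /\
  (forall u v, 0 <= fmu G u v <= 1) /\
  (forall u v, fmu G u v = fmu G v u) /\
  (forall u v, fmu G u v <= Num.min (fnu G u) (fnu G v)).

Definition fdeg (V : finType) (G : fuzzy_graph V) (v : V) : R :=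
  \sum_(u : V | u != v) fmu G v u.

Definition fsize (V : finType) (G : fuzzy_graph V) : R :=
  (\sum_(v : V) fdeg G v) / 2.

Definition favg (V : finType) (G : fuzzy_graph V) : R :=
  2 * fsize G / #|V|%:R.

Definition fsigma (V : finType) (G : fuzzy_graph V) : R :=
  (\sum_(v : V) (fdeg G v - favg G) ^+ 2) / #|V|%:R.

Definition cart_prod (V1 V2 : finType) (G1 : fuzzy_graph V1)
    (G2 : fuzzy_graph V2) : fuzzy_graph (V1 * V2)%type :=
  FuzzyGraph
    (fun x : V1 * V2 => Num.min (fnu G1 x.1) (fnu G2 x.2))
    (fun x y : V1 * V2 =>
       if (x.1 == y.1) && (x.2 != y.2) then fmu G2 x.2 y.2
       else if (x.2 == y.2) && (x.1 != y.1) then fmu G1 x.1 y.1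
       else 0).

End FuzzyGraphs.

(* Main.v *)
Require Import Defs.
From mathcomp Require Import all_boot all_order all_algebra.
From mathcomp Require Import ring lra.
Import Order.TTheory GRing.Theory Num.Theory.
Local Open Scope ring_scope.

Lemma sum_prod (R : realFieldType) (V1 V2 : finType) (F : V1 * V2 -> R) :
  \sum_x F x = \sum_a \sum_b F (a, b).
Proof. by rewrite pair_bigA; apply: eq_bigr => -[]. Qed.

Lemma sum_ind (R : realFieldType) (T : finType) (F : T -> R) (x : T) :
  \sum_i (x == i)%:R * F i = F x.
Proof.
rewrite (bigD1 x) //= eqxx mul1r big1 ?addr0 //.
by move=> i; rewrite eq_sym => /negbTE ->; rewrite mul0r.
Qed.

Lemma sum_indc (R : realFieldType) (T : finType) (c : R) (x : T) :
  \sum_i (x == i)%:R * c = c.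
Proof. exact: (@sum_ind R T (fun=> c)). Qed.

Lemma favgE (R : realFieldType) (V : finType) (G : fuzzy_graph R V) :
  favg G = (\sum_v fdeg G v) / #|V|%:R.
Proof. rewrite /favg /fsize; congr (_ / _); by field. Qed.

Lemma centered (R : realFieldType) (V : finType) (f : V -> R) :
  (0 < #|V|)%N -> \sum_v (f v - (\sum_u f u) / #|V|%:R) = 0.
Proof.
move=> h; rewrite sumrB sumr_const -mulr_natr; field.
by rewrite pnatr_eq0 -lt0n.
Qed.

Lemma fdeg_prod (R : realFieldType) (V1 V2 : finType)
  (G1 : fuzzy_graph R V1) (G2 : fuzzy_graph R V2) (u : V1) (v : V2) :
  fdeg (cart_prod G1 G2) (u, v) = fdeg G1 u + fdeg G2 v.
Proof.
rewrite /fdeg.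
transitivity (\sum_(x : V1 * V2) fmu (cart_prod G1 G2) (u, v) x).
  rewrite [RHS](bigD1 (u, v)) //= !eqxx /= add0r; exact: eq_bigr.
apply: etrans; first exact: sum_prod. rewrite /=.
under eq_bigr => a _ do under eq_bigr => b _ do
  have -> : (if (u == a) && (v != b) then fmu G2 v b
             else if (v == b) && (u != a) then fmu G1 u a else 0) =
            (u == a)%:R * (if b != v then fmu G2 v b else 0) +
            (v == b)%:R * (if a != u then fmu G1 u a else 0)
   by case: (eqVneq u a) => [<-|ne]; case: (eqVneq v b) => [<-|ne'];
      rewrite ?eqxx ?mul1r ?mul0r ?addr0 ?add0r //= ?(negbTE ne) ?(negbTE ne')
      ?(eq_sym b v) ?(eq_sym a u) ?(negbTE ne) ?(negbTE ne') ?mul0r ?addr0 ?add0r ?mul1r.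
rewrite addrC.
under eq_bigr => a _ do rewrite big_split /= -mulr_sumr.
rewrite big_split /= sum_indc.
rewrite (eq_bigr (fun a : V1 => if a != u then fmu G1 u a else 0)); last by move=> a _; rewrite sum_indc.
by rewrite -!big_mkcond.
Qed.


Theorem theorem2p6 (R : realFieldType) (V1 V2 : finType)
  (G1 : fuzzy_graph R V1) (G2 : fuzzy_graph R V2) :
  (0 < #|V1|)%N -> (0 < #|V2|)%N ->
  is_fuzzy_graph G1 -> is_fuzzy_graph G2 ->
  fsigma (cart_prod G1 G2) = fsigma G1 + fsigma G2.
Proof.
move=> h1 h2 _ _.
rewrite /fsigma !favgE card_prod natrM.
set d1 := fdeg G1; set d2 := fdeg G2.
set n1 := #|V1|%:R; set n2 := #|V2|%:R.
have n1P : n1 != 0 by rewrite pnatr_eq0 -lt0n.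
have n2P : n2 != 0 by rewrite pnatr_eq0 -lt0n.
have hS : \sum_(x : V1 * V2) fdeg (cart_prod G1 G2) x =
          n2 * \sum_a d1 a + n1 * \sum_b d2 b.
  apply: etrans; first exact: sum_prod. rewrite /=.
  under eq_bigr => a _ do under eq_bigr => b _ do rewrite fdeg_prod.
  under eq_bigr => a _ do rewrite big_split /= sumr_const -mulr_natr.
  rewrite big_split /= sumr_const -mulr_natr -mulr_suml.
  rewrite /n1 /n2; ring.
rewrite hS.
set a1 := (\sum_a d1 a) / n1; set a2 := (\sum_b d2 b) / n2.
have -> : (n2 * \sum_a d1 a + n1 * \sum_b d2 b) / (n1 * n2) = a1 + a2.
  by rewrite /a1 /a2; field; apply/andP; split.
have E : \sum_(v : V1 * V2) (fdeg (cart_prod G1 G2) v - (a1 + a2)) ^+ 2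
    = \sum_a \sum_b (d1 a + d2 b - (a1 + a2)) ^+ 2.
  apply: etrans; first exact: sum_prod.
  by apply: eq_bigr => a _; apply: eq_bigr => b _; rewrite fdeg_prod.
rewrite E.
have c1 := @centered _ _ d1 h1; have c2 := @centered _ _ d2 h2.
rewrite -/n1 -/a1 in c1; rewrite -/n2 -/a2 in c2.
under eq_bigr => a _ do under eq_bigr => b _ do
  have -> : (d1 a + d2 b - (a1 + a2)) ^+ 2 =
    (d1 a - a1) ^+ 2 + ((d2 b - a2) ^+ 2 + 2 * (d1 a - a1) * (d2 b - a2))
    by ring.
under eq_bigr => a _ do rewrite big_split /= big_split /= sumr_const -mulr_natr
   -mulr_sumr c2 mulr0 addr0.
rewrite big_split /= sumr_const sumrMnl -[X in (X + _) / _]mulr_natr -[X in (_ + X) / _]mulr_natr.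
rewrite -/n1 -/n2.
field; apply/andP; split => //.
Qed.
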